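(* Let $(\boldsymbol\Sigma,\sigma)$ be a primitive Markov subshift on a countable alphabet. Suppose $u\in C^0(\boldsymbol\Sigma)$ is a bounded sub-action for a bounded above and coercive potential $A\in C^0(\boldsymbol\Sigma)$. If $\mu\in\mathcal M_\sigma$ is an $A$-maximizing probability, then $\mu$ is supported in a Markov subshift on a finite alphabet, i.e. there exists an integer $I\ge0$ with $\operatorname{supp}\mu\subseteq\Sigma_I$.
   Context: Let $\mathbf M:\mathbb Z_+\times\mathbb Z_+\to\{0,1\}$ be a transition matrix. Put $\mathcal B_0=\{i:\mathbf M(i,j)=1\text{ for some }j\}$, $\mathcal B_n=\{i:\mathbf M(i,j)=1\text{ for some }j\in\mathcal B_{n-1}\}$. $\mathbf M$ is primitive if there exist $\mathbb F\subseteq\mathbb Z_+$ and an integer $K_0\ge0$ such that for all $i,j\in\bigcap_{n\ge0}\mathcal B_n$ there are $\ell_1,\dots,\ell_{K_0}\in\mathbb F$ with $\mathbf M(i,\ell_1)\mathbf M(\ell_1,\ell_2)\cdots\mathbf M(\ell_{K_0},j)=1$. $\boldsymbol\Sigma=\{\mathbf x\in\mathbb Z_+^{\mathbb Z_+}:\mathbf M(x_j,x_{j+1})=1\ \forall j\}$ with metric $d(\mathbf x,\mathbf y)=\lambda^{\min\{j:x_j\neq y_j\}}$, $\lambda\in(0,1)$ fixed; $\sigma$ the left shift; $[i]=\{\mathbf x:x_0=i\}$. $\mathcal M_\sigma$ = $\sigma$-invariant Borel probabilities; $\beta_A=\sup_{\mu\in\mathcal M_\sigma}\int A\,d\mu$;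 $\mu$ is $A$-maximizing if $\int A\,d\mu=\beta_A$. A sub-action for $A$ is a continuous $u$ with $A+u-u\circ\sigma\le\beta_A$ everywhere. $A$ is coercive if $\lim_{i\to+\infty}\sup A|_{[i]}=-\infty$. For an integer $I\ge0$, $\Sigma_I=\{\mathbf x\in\{0,\dots,I\}^{\mathbb Z_+}:\mathbf M(x_j,x_{j+1})=1\ \forall j\}$. *)

(* Defs.v *)
From HB Require Import structures.
From mathcomp Require Import all_boot all_order all_algebra.
From mathcomp Require Import all_classical all_reals all_analysis.
Set Implicit Arguments. Unset Strict Implicit. Unset Printing Implicit Defensive.
Import Order.TTheory GRing.Theory Num.Theory.
Local Open Scope classical_set_scope.
Local Open Scope ring_scope.

(* Points of the full shift Z_+^{Z_+}, alphabet Z_+ = nat = {0,1,2,...}. *)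
Definition seqN := nat -> nat.

Fixpoint Bset (M : nat -> nat -> bool) (n : nat) : set nat :=
  match n with
  | 0 => [set i | exists j, M i j]
  | n'.+1 => [set i | exists j, Bset M n' j /\ M i j]
  end.

Definition primitive (M : nat -> nat -> bool) : Prop :=
  exists (F : set nat) (K0 : nat),
    forall i j, (forall n, Bset M n i) -> (forall n, Bset M n j) ->
      exists s : seq nat, size s = K0 /\ (forall l, l \in s -> F l) /\
        path M i (rcons s j).

Definition Sigma (M : nat -> nat -> bool) : set seqN :=
  [set x | forall j, M (x j) (x j.+1)].

Definition SigmaI (M : nat -> nat -> bool) (I : nat) : set seqN :=
  [set x | (forall j, x j <= I)%N /\ forall j, M (x j) (x j.+1)].

Definition shift (x : seqN) : seqN := fun j => x j.+1.

(* For the metric d(x,y) = lambda^{min{j : x_j <> y_j}} (0<lambda<1) the open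
   ball B(x,r) with lambda^n < r <= lambda^(n-1) is exactly cyl x n, so these
   cylinders form a neighbourhood basis of the metric topology. *)
Definition cyl (x : seqN) (n : nat) : set seqN :=
  [set y | forall j, (j < n)%N -> y j = x j].

Definition shift_open (U : set seqN) : Prop :=
  forall x, U x -> exists n, cyl x n `<=` U.

Definition contSigma {R : realType} (M : nat -> nat -> bool) (f : seqN -> R) :=
  forall x, Sigma M x -> forall e : R, 0 < e ->
    exists n, forall y, Sigma M y -> cyl x n y -> `|f x - f y| < e.

Definition BorelShift := g_sigma_algebraType shift_open.

(* sigma-invariant Borel probabilities on Sigma (as probabilities on the full
   shift concentrated on the closed set Sigma) *)
Definition invariant_prob {R : realType} (M : nat -> nat -> bool)
    (P : probability BorelShift R) : Prop :=
  P (Sigma M) = 1%E /\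
  forall B : set BorelShift, measurable B -> P (shift @^-1` B) = P B.

Definition integral_on {R : realType} (M : nat -> nat -> bool)
    (P : probability BorelShift R) (A : seqN -> R) : \bar R :=
  (\int[P]_(x in (Sigma M : set BorelShift)) (A x)%:E)%E.

Definition betaA {R : realType} (M : nat -> nat -> bool) (A : seqN -> R) : \bar R :=
  ereal_sup [set integral_on M P A | P in [set P | @invariant_prob R M P]].

Definition maximizing {R : realType} (M : nat -> nat -> bool) (A : seqN -> R)
    (P : probability BorelShift R) : Prop :=
  invariant_prob M P /\ integral_on M P A = betaA M A.

Definition subaction {R : realType} (M : nat -> nat -> bool) (A u : seqN -> R) :=
  contSigma M u /\
  forall x, Sigma M x -> ((A x + u x - u (shift x))%:E <= betaA M A)%E.

Definition coercive {R : realType} (M : nat -> nat -> bool) (A : seqN -> R) :=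
  forall K : R, exists N, forall i, (N <= i)%N ->
    forall x, Sigma M x -> x 0%N = i -> A x <= K.

Definition mu_support {R : realType} (M : nat -> nat -> bool)
    (P : probability BorelShift R) : set seqN :=
  [set x | Sigma M x /\
     forall U : set BorelShift, shift_open U -> U x -> (0 < P (U `&` Sigma M))%E].

(* Main.v *)
Require Import Defs.
From HB Require Import structures.
From mathcomp Require Import all_boot all_order all_algebra.
From mathcomp Require Import all_classical all_reals all_analysis.
From mathcomp Require Import lra measurable_realfun.
Import Order.TTheory GRing.Theory Num.Theory.
Local Open Scope classical_set_scope.
Local Open Scope ring_scope.
Definition sh : BorelShift -> BorelShift := Defs.shift.

Lemma open_meas (U : set BorelShift) : shift_open U -> measurable U.
Proof. by move=> hU; apply: sub_sigma_algebra. Qed.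

Lemma shift_meas : measurable_fun (setT : set BorelShift) sh.
Proof.
apply: (measurability (shift_open : set (set BorelShift))) => //.
move=> _ [U oU <-]; apply: open_meas.
move=> x [_ /= Ux]; have [n hn] := oU _ Ux.
exists n.+1 => y hy; split => //; apply: hn => j hj; exact: hy.
Qed.

Lemma cyl_open x n : shift_open (cyl x n).
Proof.
move=> y hy; exists n => z hz j hj; rewrite hz // hy //.
Qed.

Lemma Sigma_meas M : measurable (Sigma M : set BorelShift).
Proof.
rewrite -[Sigma M]setCK; apply: measurableC; apply: open_meas.
move=> x /= nx.
have [j hj] : exists j, ~~ M (x j) (x j.+1).
  apply: contrapT => hn; apply: nx => j; apply: contrapT => hj; apply: hn.
  by exists j; apply/negP.
exists j.+2 => y hy /= Sy; move: (Sy j); rewrite !hy //; apply/negP; exact: hj.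
Qed.

Lemma cont_meas {R : realType} M (f : seqN -> R) :
  contSigma M f -> measurable_fun (Sigma M : set BorelShift) f.
Proof.
move=> cf; apply: (measurability _ (measurable_realfun.RGenInftyO.measurableE R)) => //.
move=> _ [_ [a ->] <-].
pose V := [set y : seqN | exists n, forall z, Sigma M z -> cyl y n z -> f z < a].
have -> : (Sigma M : set BorelShift) `&` f @^-1` `]-oo, a[ = (Sigma M) `&` V.
  apply/seteqP; split => y [Sy].
    rewrite /preimage /= in_itv /= => fya; split => //.
    have := cf y Sy (a - f y); rewrite subr_gt0 => /(_ fya) [n hn].
    exists n => z Sz cz; have := hn z Sz cz.
    rewrite ltr_norml => /andP[H _]; lra.
  move=> [n hn]; split => //; rewrite /preimage /= in_itv /=.
  by apply: hn.
apply: measurableI; first exact: Sigma_meas.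
apply: open_meas => y [n hn]; exists n => y' hy'; exists n => z Sz cz.
apply: hn => // j hj; rewrite cz // hy' //.
Qed.

Section Int.
Context d (T : measurableType d) (R : realType).
Variable mu : {measure set T -> \bar R}.

Lemma le_int D (mD : measurable D) (f g : T -> R) :
  measurable_fun D f -> measurable_fun D g -> (forall x, D x -> f x <= g x) ->
  (\int[mu]_(x in D) (f x)%:E <= \int[mu]_(x in D) (g x)%:E)%E.
Proof.
move=> mf mg fg; rewrite integralE [leRHS]integralE; apply: leeB.
- apply: ge0_le_integral => //.
  + by apply: measurable_realfun.measurable_funepos; apply/measurable_EFinP.
  + by apply: measurable_realfun.measurable_funepos; apply/measurable_EFinP.
  + move=> x Dx; apply: (@funepos_le _ _ D) => //; last exact/mem_set.
    by move=> y /set_mem Dy; rewrite lee_fin; apply: fg.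
- apply: ge0_le_integral => //.
  + by apply: measurable_realfun.measurable_funeneg; apply/measurable_EFinP.
  + by apply: measurable_realfun.measurable_funeneg; apply/measurable_EFinP.
  + move=> x Dx; apply: (@funeneg_le _ _ D) => //; last exact/mem_set.
    by move=> y /set_mem Dy; rewrite lee_fin; apply: fg.
Qed.
End Int.

Lemma bnd_int {R : realType} (P : probability BorelShift R) D (mD : measurable D)
  (f : BorelShift -> R) (C : R) :
  measurable_fun D f -> (forall x, D x -> `|f x| <= C) ->
  P.-integrable D (EFin \o f).
Proof.
move=> mf hC; apply: measurable_bounded_integrable => //.
  by rewrite (le_lt_trans (probability_le1 _ mD)) // ltry.
exists C; split; first exact: num_real.
move=> K hK x Dx /=; rewrite (le_trans (hC x Dx)) //; exact: ltW.
Qed.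

Theorem mainTheorem7 (R : realType) (M : nat -> nat -> bool)
    (A u : seqN -> R) (P : probability BorelShift R) :
  primitive M ->
  contSigma M A ->
  (exists C : R, forall x, Sigma M x -> A x <= C) ->
  coercive M A ->
  subaction M A u ->
  (exists C : R, forall x, Sigma M x -> `|u x| <= C) ->
  maximizing M A P ->
  exists I : nat, mu_support M P `<=` SigmaI M I.
Proof.
move=> _ cA [CA hCA] coer [cu subu] [Cu hCu] [[PS inv] Hint].
set S : set BorelShift := Sigma M.
have mS : measurable S := Sigma_meas M.
have [x0 Sx0] : exists x0, S x0.
  apply: contrapT => hne; move: PS.
  have -> : Sigma M = set0 by apply/seteqP; split => x // Sx; apply: hne; exists x.
  by rewrite measure0 => /eqP; rewrite eq_sym onee_eq0.
have Cu0 : 0 <= Cu := le_trans (normr_ge0 _) (hCu x0 Sx0).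
have mA := @cont_meas R M A cA.
have mu_ := @cont_meas R M u cu.
have hlo := subu x0 Sx0.
have hup : (betaA M A <= CA%:E)%E.
  rewrite -Hint /integral_on.
  apply: (le_trans (le_int _ _ _ P _ mS A (fun=> CA) mA (measurable_cst CA) hCA)).
  have PS1 : P S = 1%E by exact: PS.
  rewrite (integral_cst P mS CA%:E).
  by rewrite -[X in (_ * X)%E]/(P S) PS1 mule1.
have [b hb] : exists b : R, betaA M A = b%:E.
  move: hlo hup; case: (betaA M A) => [r _ _|_|].
  - by exists r.
  - by rewrite leNgt ltry.
  - by rewrite leNgt ltNyr.
have [N hN] := coer (b - 2 * Cu - 1).
pose F j := [set y : BorelShift | (forall k, (j <= k)%N -> M (y k) (y k.+1)) /\ (N <= y j)%N].
have mF j : measurable (F j).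
  apply: measurableI.
  - rewrite -[X in measurable X]setCK; apply: measurableC; apply: open_meas.
    move=> y /= ny.
    have [k [jk hk]] : exists k, (j <= k)%N /\ ~~ M (y k) (y k.+1).
      apply: contrapT => hn; apply: ny => k jk; apply: contrapT => hj; apply: hn.
      by exists k; split => //; apply/negP.
    exists k.+2 => z hz /= hz'; move: (hz' k jk); rewrite !hz //; apply/negP; exact: hk.
  - apply: open_meas => y /= hy; exists j.+1 => z hz /=; rewrite hz //.
have FS : F 0%N `<=` S by move=> y [h _] k; exact: h.
pose E := F 0%N.
have mE : measurable E := mF 0%N.
pose ut : BorelShift -> R := fun x => if x \in S then u x else 0.
have mut : measurable_fun setT ut.
  rewrite -(setUv S); apply/(measurable_funU _ mS (measurableC mS)); split.
  - apply: (@eq_measurable_fun _ _ _ _ _ (u : BorelShift -> R)) mu_ => x /set_mem Sx.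
    by rewrite /ut (mem_set Sx).
  - apply: (@eq_measurable_fun _ _ _ _ _ (cst (0:R))) (measurable_cst (0:R)) => x /set_mem Sx.
    by rewrite /ut memNset.
have but x : `|ut x| <= Cu.
  rewrite /ut; case: ifPn => [/set_mem Sx|_]; [exact: hCu|by rewrite normr0].
have muts : measurable_fun setT (ut \o sh) := measurableT_comp mut shift_meas.
have PC : P (~` S) = 0%E.
  by rewrite probability_setC // -[X in (_ - X)%E]/(P S) -[P S]/(P (Sigma M)) PS subee.
have eqS (g : BorelShift -> R) : measurable_fun setT g -> (forall x, `|g x| <= Cu) ->
    (\int[P]_(x in S) (g x)%:E = \int[P]_(x in setT) (g x)%:E)%E.
  move=> mg bg; rewrite (@negligible_integral _ _ _ P setT (~` S)) //.
all: try (by rewrite setTD setCK).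
all: try exact: measurableC.
exact (bnd_int P setT measurableT g Cu mg (fun x _ => bg x)).
have key : (\int[P]_(x in S) (ut (sh x))%:E = \int[P]_(x in S) (ut x)%:E)%E.
  rewrite (eqS (ut \o sh)) //; last by move=> x; exact: but.
  rewrite [RHS](eqS ut) //.
  transitivity (\int[pushforward P sh]_(x in setT) (ut x)%:E)%E.
    rewrite integral_pushforward //.
    - exact: shift_meas.
    - exact/measurable_EFinP.
    - rewrite preimage_setT; exact (bnd_int P setT measurableT (ut \o sh) Cu muts (fun x _ => but _)).
  apply: (eq_measure_integral P); first exact: shift_meas.
  by move=> ? B mB _; rewrite /pushforward; exact: inv.
pose hf : BorelShift -> R := fun x => (ut (sh x) - ut x) + (b - (\1_E x : R)).
have Ale x : S x -> A x <= hf x.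
  move=> Sx; have Ssx : S (sh x) by move=> k; exact: Sx k.+1.
  rewrite /hf /ut (mem_set Sx) (mem_set Ssx) indicE.
  have := hCu x Sx; have := hCu _ Ssx; rewrite /sh !ler_norml => /andP[h1 h2] /andP[h3 h4].
  case hE : (x \in E) => /=.
  - move: hE => /set_mem [_ hx0]; have := hN _ hx0 x Sx erefl; lra.
  - have := subu x Sx; rewrite hb lee_fin; lra.
have mhf : measurable_fun setT hf.
  apply: measurable_funD; first exact: measurable_funB.
  apply: measurable_funB; first exact: measurable_cst.
  exact: measurable_indic.
have i1 : (\int[P]_(x in S) (ut (sh x) - ut x)%:E = 0)%E.
  under eq_integral do rewrite EFinB.
  rewrite (@integralB_EFin _ _ _ P S (ut \o sh) ut mS).
  - by rewrite key subee // (integrable_fin_num mS) //; exact (bnd_int P S mS ut Cu (measurable_funTS mut) (fun x _ => but x)).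
  - exact (bnd_int P S mS (ut \o sh) Cu (measurable_funTS muts) (fun x _ => but _)).
  - exact (bnd_int P S mS ut Cu (measurable_funTS mut) (fun x _ => but x)).
have PS1 : P S = 1%E by exact: PS.
have i2 : (\int[P]_(x in S) (b - (\1_E x : R))%:E = b%:E - P E)%E.
  under eq_integral do rewrite EFinB.
  rewrite (@integralB_EFin _ _ _ P S (cst b) (\1_E) mS).
  - rewrite (integral_cst P mS b%:E) -[X in (_ * X)%E]/(P S) PS1 mule1.
    by rewrite integral_indic // setIidl.
  - exact (bnd_int P S mS (cst b) `|b| (measurable_cst _) (fun x _ => lexx _)).
  - have mI : measurable_fun S (\1_E : BorelShift -> R) by exact: measurable_indic.
    have := bnd_int P S mS (\1_E : BorelShift -> R) 1 mI.
    move=> h; apply: h => x _; rewrite indicE.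
    by case: (_ \in _); rewrite ?normr1 ?normr0.
have ihf : (\int[P]_(x in S) (hf x)%:E = b%:E - P E)%E.
  rewrite /hf; under eq_integral do rewrite EFinD.
  rewrite (@integralD _ _ _ P S mS (fun x => (ut (sh x) - ut x)%:E) (fun x => (b - \1_E x)%:E)).
  - by rewrite i1 i2 add0e.
  - have mI : measurable_fun S (fun x => ut (sh x) - ut x).
      exact/measurable_funTS/measurable_funB.
    have := bnd_int P S mS (fun x => ut (sh x) - ut x) (Cu + Cu) mI.
    move=> h; apply: h => x _; rewrite (le_trans (ler_normB _ _)) // lerD //.
  - have mI : measurable_fun S (fun x => b - (\1_E x : R)).
      apply/measurable_funTS/measurable_funB; first exact: measurable_cst.
      exact: measurable_indic.
    have := bnd_int P S mS (fun x => b - (\1_E x : R)) (`|b| + 1) mI.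
    move=> h; apply: h => x _; rewrite (le_trans (ler_normB _ _)) // lerD // indicE.
    by case: (_ \in _); rewrite ?normr1 ?normr0.
have ineq : (b%:E <= b%:E - P E)%E.
  apply: (@le_trans _ _ (integral_on M P A)); first by rewrite Hint hb.
  have h := le_int _ _ _ P _ mS A hf mA (measurable_funTS mhf) Ale.
  apply: (le_trans h); rewrite le_eqVlt; apply/orP; left; apply/eqP.
  exact ihf.
have PE0 : P E = 0%E.
  have fin : P E \is a fin_num by apply: fin_num_measure.
  have ge0 : (0 <= P E)%E by apply: measure_ge0.
  move: ineq ge0; rewrite -(fineK fin) -EFinB !lee_fin => h1 h2.
  by apply/eqP; rewrite eqe; apply/eqP; lra.
have PF j : P (F j) = 0%E.
  elim: j => [|j IH]; first exact: PE0.
  have -> : F j.+1 = Defs.shift @^-1` F j.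
    apply/seteqP; split => y [h1 h2]; split => //.
    - by move=> k jk; exact: h1 k.+1 jk.
    - by move=> [|k] // jk; exact: h1 k jk.
  by rewrite inv.
exists N => x [Sx hx]; split => // j.
rewrite leqNgt; apply/negP => hlt.
have mU : measurable ((cyl x j.+1 : set BorelShift) `&` S).
  by apply: measurableI => //; apply: open_meas; exact: cyl_open.
have h2 := hx (cyl x j.+1) (cyl_open x j.+1) (fun k _ => erefl).
have sub : (cyl x j.+1 : set BorelShift) `&` S `<=` F j.
  move=> y [cy Sy]; split; first by move=> k _; exact: Sy k.
  by rewrite cy // ltnW.
have h1 := le_measure P (mem_set mU) (mem_set (mF j)) sub.
have h1' : (P ((cyl x j.+1 : set BorelShift) `&` S) <= 0)%E.
  by rewrite -(PF j); exact h1.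
have : (0 < 0 :> \bar R)%E by exact (lt_le_trans h2 h1').
by rewrite ltxx.
Qed.
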